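(* Let $K$ be a $b$-complete idempotent semiring, $X$ a nonempty set, and $V$ a $b$-complete functional semimodule on $X$. Then $V$ is a functional $b$-semimodule on $X$ (i.e., a $b$-subsemimodule of $K(X)$) if and only if every integral operator $A\colon V\to W$, for every $b$-complete semimodule $W$ over $K$, is $b$-linear.
   Context: Idempotent semigroup: commutative, associative, idempotent $\oplus$ with order $x\preceq y$ iff $x\oplus y=y$; $\oplus X$ least upper bound; $b$-complete: every bounded above subset (incl. $\emptyset$) has a least upper bound. A homomorphism of $b$-complete semigroups is a $b$-homomorphism if it preserves least upper bounds of bounded above subsets. Idempotent semiring: idempotent commutative associative $\oplus$, associative $\odot$ bi-distributive, unit $\mathbf 1$, zero $\mathbf 0$; $b$-complete if $b$-complete and $k\odot(\oplus X)=\oplus(k\odot X)$, $(\oplus X)\odot k=\oplus(X\odot k)$ for bounded $X$. Idempotent semimodule over $K$: idempotent semigroup with associative bi-distributive $K$-action, $\mathbf 1\odot x=x$, $\mathbf 0\odot x=\mathbf 0$; $b$-complete if $b$-complete as semigroup and $(\oplus Q)\odot x=\oplus(Q\odot x)$, $k\odot(\oplus X)=\oplus(k\odot X)$ for bounded $Q,X$. A map is linear if it preserves $\oplus$ and scalar multiplication; $b$-linear if moreover a $b$-homomorphism. A subsemimodule is a subset closed under $\oplus$ and scalar multiplication; a subsemimodule of a $b$-complete semimodule is a $b$-subsemimodule if the embedding is a $b$-homomorphism. If $W$ is $b$-complete and $V\subset W$ is closed under scalar multiplication and an upper semilattice in the induced order, $V$ is a quasisubsemimodule if it is a semimodule under $x\oplus_V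 y=$ least upper bound of $\{x,y\}$ in $V$. $K(X)$: all maps $X\to K$, pointwise operations. A functional semimodule on $X$ is a quasisubsemimodule of $K(X)$; $b$-complete if it is a $b$-complete semimodule; a functional $b$-semimodule if it is a $b$-subsemimodule of $K(X)$. A mapping $A\colon V\to W$ is an integral operator if there is a map $k\colon X\to W$ (kernel) such that for every $f\in V$ the set $\{f(x)\odot k(x)\mid x\in X\}$ is bounded in $W$ and $Af=\sup_{x\in X}(f(x)\odot k(x))$. *)

(* Defs.v *)
Definition ub {T : Type} (le : T -> T -> Prop) (S : T -> Prop) (b : T) : Prop :=
  forall x, S x -> le x b.
Definition is_lub {T : Type} (le : T -> T -> Prop) (S : T -> Prop) (s : T) : Prop :=
  ub le S s /\ forall b, ub le S b -> le s b.
Definition bounded {T : Type} (le : T -> T -> Prop) (S : T -> Prop) : Prop :=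
  exists b, ub le S b.
Definition b_complete_order {T : Type} (le : T -> T -> Prop) : Prop :=
  forall S : T -> Prop, bounded le S -> exists s, is_lub le S s.
Definition img {A B : Type} (f : A -> B) (S : A -> Prop) : B -> Prop :=
  fun y => exists x, S x /\ y = f x.
Definition pair_set {T : Type} (a b : T) : T -> Prop := fun x => x = a \/ x = b.
Definition subset_of {T : Type} (S V : T -> Prop) : Prop := forall x, S x -> V x.

Record idem_semiring := IdemSemiring {
  sr_car :> Type;
  sr_add : sr_car -> sr_car -> sr_car;
  sr_mul : sr_car -> sr_car -> sr_car;
  sr_zero : sr_car;
  sr_one : sr_car;
  sr_addA : forall x y z, sr_add x (sr_add y z) = sr_add (sr_add x y) z;
  sr_addC : forall x y, sr_add x y = sr_add y x;
  sr_addI : forall x, sr_add x x = x;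
  sr_add0 : forall x, sr_add sr_zero x = x;
  sr_mulA : forall x y z, sr_mul x (sr_mul y z) = sr_mul (sr_mul x y) z;
  sr_mulDl : forall x y z, sr_mul x (sr_add y z) = sr_add (sr_mul x y) (sr_mul x z);
  sr_mulDr : forall x y z, sr_mul (sr_add x y) z = sr_add (sr_mul x z) (sr_mul y z);
  sr_mul1l : forall x, sr_mul sr_one x = x;
  sr_mul1r : forall x, sr_mul x sr_one = x;
  sr_mul0l : forall x, sr_mul sr_zero x = sr_zero;
  sr_mul0r : forall x, sr_mul x sr_zero = sr_zero
}.

Definition sr_le (K : idem_semiring) (x y : K) : Prop := sr_add K x y = y.

Definition b_complete_semiring (K : idem_semiring) : Prop :=
  b_complete_order (sr_le K) /\
  (forall (S : K -> Prop) (s k : K), bounded (sr_le K) S -> is_lub (sr_le K) S s ->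
     is_lub (sr_le K) (img (sr_mul K k) S) (sr_mul K k s)) /\
  (forall (S : K -> Prop) (s k : K), bounded (sr_le K) S -> is_lub (sr_le K) S s ->
     is_lub (sr_le K) (img (fun x => sr_mul K x k) S) (sr_mul K s k)).

Record idem_semimodule (K : idem_semiring) := IdemSemimodule {
  sm_car :> Type;
  sm_add : sm_car -> sm_car -> sm_car;
  sm_zero : sm_car;
  sm_smul : K -> sm_car -> sm_car;
  sm_addA : forall x y z, sm_add x (sm_add y z) = sm_add (sm_add x y) z;
  sm_addC : forall x y, sm_add x y = sm_add y x;
  sm_addI : forall x, sm_add x x = x;
  sm_smulA : forall (k l : K) x, sm_smul k (sm_smul l x) = sm_smul (sr_mul K k l) x;
  sm_smulDl : forall (k l : K) x, sm_smul (sr_add K k l) x = sm_add (sm_smul k x) (sm_smul l x);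
  sm_smulDr : forall (k : K) x y, sm_smul k (sm_add x y) = sm_add (sm_smul k x) (sm_smul k y);
  sm_smul1 : forall x, sm_smul (sr_one K) x = x;
  sm_smul0 : forall x, sm_smul (sr_zero K) x = sm_zero
}.

Arguments sm_add {K} i _ _.
Arguments sm_smul {K} i _ _.
Arguments sm_zero {K} i.

Definition sm_le (K : idem_semiring) (W : idem_semimodule K) (x y : W) : Prop :=
  sm_add W x y = y.

Arguments sm_le {K} W _ _.

Definition b_complete_semimodule {K : idem_semiring} (W : idem_semimodule K) : Prop :=
  b_complete_order (sm_le W) /\
  (forall (Q : K -> Prop) (q : K) (x : W), bounded (sr_le K) Q -> is_lub (sr_le K) Q q ->
     is_lub (sm_le W) (img (fun k => sm_smul W k x) Q) (sm_smul W q x)) /\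
  (forall (k : K) (S : W -> Prop) (s : W), bounded (sm_le W) S -> is_lub (sm_le W) S s ->
     is_lub (sm_le W) (img (sm_smul W k) S) (sm_smul W k s)).

Set Implicit Arguments.
Unset Strict Implicit.

Section Functional.
Variables (K : idem_semiring) (X : Type).

Definition fle (f g : X -> K) : Prop := forall x, sr_le K (f x) (g x).
Definition fadd (f g : X -> K) : X -> K := fun x => sr_add K (f x) (g x).
Definition fsmul (c : K) (f : X -> K) : X -> K := fun x => sr_mul K c (f x).
Definition fzero : X -> K := fun _ => sr_zero K.

Definition vlub (V : (X -> K) -> Prop) (S : (X -> K) -> Prop) (s : X -> K) : Prop :=
  V s /\ ub fle S s /\ forall b, V b -> ub fle S b -> fle s b.
Definition vbounded (V : (X -> K) -> Prop) (S : (X -> K) -> Prop) : Prop :=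
  exists b, V b /\ ub fle S b.

(* V is a quasisubsemimodule of K(X): closed under scalar multiplication,
   an upper semilattice in the induced order, and a semimodule for
   f (+)_V g := least upper bound of {f,g} in V. (Associativity, commutativity,
   idempotence of (+)_V, and the scalar axioms 1.f = f, k.(l.f) = (kl).f,
   0.f = 0 hold automatically; the remaining axioms are stated explicitly.) *)
Definition functional_semimodule (V : (X -> K) -> Prop) : Prop :=
  (forall c f, V f -> V (fsmul c f)) /\
  V fzero /\
  (forall f g, V f -> V g -> exists h, vlub V (pair_set f g) h) /\
  (forall (k : K) f g h, V f -> V g -> vlub V (pair_set f g) h ->
     vlub V (pair_set (fsmul k f) (fsmul k g)) (fsmul k h)) /\
  (forall (k l : K) f, V f ->
     vlub V (pair_set (fsmul k f) (fsmul l f)) (fsmul (sr_add K k l) f)).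

Definition b_complete_functional_semimodule (V : (X -> K) -> Prop) : Prop :=
  (forall S, subset_of S V -> vbounded V S -> exists s, vlub V S s) /\
  (forall (Q : K -> Prop) (q : K) f, V f -> bounded (sr_le K) Q -> is_lub (sr_le K) Q q ->
     vlub V (img (fun k => fsmul k f) Q) (fsmul q f)) /\
  (forall (k : K) S s, subset_of S V -> vbounded V S -> vlub V S s ->
     vlub V (img (fsmul k) S) (fsmul k s)).

(* V is a functional b-semimodule: a b-subsemimodule of K(X), i.e. closed under
   the operations of K(X) and the embedding preserves lubs of bounded subsets *)
Definition functional_b_semimodule (V : (X -> K) -> Prop) : Prop :=
  (forall f g, V f -> V g -> V (fadd f g)) /\
  (forall c f, V f -> V (fsmul c f)) /\
  (forall S s, subset_of S V -> vbounded V S -> vlub V S s -> is_lub fle S s).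

(* integral operators V -> W (values of A outside V are irrelevant) *)
Definition integral_operator (V : (X -> K) -> Prop) (W : idem_semimodule K)
    (A : (X -> K) -> W) : Prop :=
  exists k : X -> W, forall f, V f ->
    bounded (sm_le W) (fun w => exists x, w = sm_smul W (f x) (k x)) /\
    is_lub (sm_le W) (fun w => exists x, w = sm_smul W (f x) (k x)) (A f).

Definition b_linear (V : (X -> K) -> Prop) (W : idem_semimodule K)
    (A : (X -> K) -> W) : Prop :=
  (forall f g h, V f -> V g -> vlub V (pair_set f g) h -> A h = sm_add W (A f) (A g)) /\
  (forall c f, V f -> A (fsmul c f) = sm_smul W c (A f)) /\
  (forall S s, subset_of S V -> vbounded V S -> vlub V S s ->
     is_lub (sm_le W) (img A S) (A s)).

End Functional.

(* Main.v *)
Require Import Defs.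
From Stdlib Require Import Classical ClassicalEpsilon FunctionalExtensionality.

Section SR.
Variable K : idem_semiring.
Lemma srle_refl (x : K) : sr_le K x x.
Proof. unfold sr_le; apply sr_addI. Qed.
Lemma srle_trans (x y z : K) : sr_le K x y -> sr_le K y z -> sr_le K x z.
Proof. unfold sr_le; intros H1 H2. rewrite <- H2, sr_addA, H1. reflexivity. Qed.
Lemma srle_antisym (x y : K) : sr_le K x y -> sr_le K y x -> x = y.
Proof. unfold sr_le; intros H1 H2. rewrite <- H1, <- H2 at 1. apply sr_addC. Qed.
Lemma srle_addl (x y : K) : sr_le K x (sr_add K x y).
Proof. unfold sr_le. rewrite sr_addA, sr_addI. reflexivity. Qed.
Lemma srle_addr (x y : K) : sr_le K y (sr_add K x y).
Proof. rewrite sr_addC. apply srle_addl. Qed.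
Lemma srle_add_least (x y b : K) : sr_le K x b -> sr_le K y b -> sr_le K (sr_add K x y) b.
Proof. unfold sr_le; intros H1 H2. rewrite <- sr_addA, H2, H1. reflexivity. Qed.
Lemma srle_0 (x : K) : sr_le K (sr_zero K) x.
Proof. unfold sr_le. apply sr_add0. Qed.
End SR.

Section SM.
Variable K : idem_semiring.
Variable W : idem_semimodule K.
Lemma smle_refl (x : W) : sm_le W x x.
Proof. unfold sm_le; apply sm_addI. Qed.
Lemma smle_trans (x y z : W) : sm_le W x y -> sm_le W y z -> sm_le W x z.
Proof. unfold sm_le; intros H1 H2. rewrite <- H2, sm_addA, H1. reflexivity. Qed.
Lemma smle_antisym (x y : W) : sm_le W x y -> sm_le W y x -> x = y.
Proof. unfold sm_le; intros H1 H2. rewrite <- H1, <- H2 at 1. apply sm_addC. Qed.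
Lemma smle_addl (x y : W) : sm_le W x (sm_add W x y).
Proof. unfold sm_le. rewrite sm_addA, sm_addI. reflexivity. Qed.
Lemma smle_addr (x y : W) : sm_le W y (sm_add W x y).
Proof. rewrite sm_addC. apply smle_addl. Qed.
Lemma smle_add_least (x y b : W) : sm_le W x b -> sm_le W y b -> sm_le W (sm_add W x y) b.
Proof. unfold sm_le; intros H1 H2. rewrite <- sm_addA, H2, H1. reflexivity. Qed.
Lemma smle_smul_mono (k l : K) (w : W) : sr_le K k l -> sm_le W (sm_smul W k w) (sm_smul W l w).
Proof. unfold sr_le, sm_le; intros H. rewrite <- sm_smulDl, H. reflexivity. Qed.
End SM.

Lemma is_lub_ext {T} (le : T -> T -> Prop) (S S' : T -> Prop) s :
  (forall x, S x <-> S' x) -> is_lub le S s -> is_lub le S' s.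
Proof.
  intros E [H1 H2]. split.
  - intros x Hx. apply H1, E, Hx.
  - intros b Hb. apply H2. intros x Hx. apply Hb, E, Hx.
Qed.

Lemma is_lub_le_ext {T} (le le' : T -> T -> Prop) S s :
  (forall x y, le x y <-> le' x y) -> is_lub le S s -> is_lub le' S s.
Proof.
  intros E [H1 H2]. split.
  - intros x Hx. apply E, H1, Hx.
  - intros b Hb. apply E, H2. intros x Hx. apply E, Hb, Hx.
Qed.

Lemma bounded_le_ext {T} (le le' : T -> T -> Prop) S :
  (forall x y, le x y <-> le' x y) -> bounded le S -> bounded le' S.
Proof. intros E [b Hb]. exists b. intros x Hx. apply E, Hb, Hx. Qed.

Lemma lub_unique {T} (le : T -> T -> Prop) S a b :
  (forall x y, le x y -> le y x -> x = y) -> is_lub le S a -> is_lub le S b -> a = b.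
Proof. intros AS [A1 A2] [B1 B2]. apply AS; [apply A2 | apply B2]; assumption. Qed.

Section Fn.
Variable K : idem_semiring.
Variable X : Type.

Lemma fle_antisym (f g : X -> K) : fle f g -> fle g f -> f = g.
Proof. intros H1 H2. apply functional_extensionality. intro x. apply srle_antisym; auto. Qed.

Lemma pw_lub (S : (X -> K) -> Prop) s :
  is_lub (@fle K X) S s -> forall x, is_lub (sr_le K) (fun c => exists f, S f /\ c = f x) (s x).
Proof.
  intros [H1 H2] x. split.
  - intros c [f [Sf ->]]. apply H1, Sf.
  - intros b Hb.
    set (t := fun y => if excluded_middle_informative (y = x) then b else s y).
    assert (Ht : fle s t).
    { apply H2. intros f Sf y. unfold t.
      destruct (excluded_middle_informative (y = x)) as [->|n].
      - apply Hb. exists f. auto.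
      - apply H1, Sf. }
    specialize (Ht x). unfold t in Ht.
    destruct (excluded_middle_informative (x = x)) as [_|n]; [exact Ht | congruence].
Qed.

Lemma lub_pw (S : (X -> K) -> Prop) s :
  (forall x, is_lub (sr_le K) (fun c => exists f, S f /\ c = f x) (s x)) -> is_lub (@fle K X) S s.
Proof.
  intros H. split.
  - intros f Sf x. apply (H x). exists f. auto.
  - intros b Hb x. apply (H x). intros c [f [Sf ->]]. apply Hb, Sf.
Qed.

Definition FW : idem_semimodule K.
Proof.
  refine (@IdemSemimodule K (X -> K) (@fadd K X) (@fzero K X) (@fsmul K X) _ _ _ _ _ _ _ _);
  intros; apply functional_extensionality; intro; unfold fadd, fsmul, fzero.
  - apply sr_addA.
  - apply sr_addC.
  - apply sr_addI.
  - apply sr_mulA.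
  - apply sr_mulDr.
  - apply sr_mulDl.
  - apply sr_mul1l.
  - apply sr_mul0l.
Defined.

Lemma FW_le (f g : X -> K) : sm_le FW f g <-> fle f g.
Proof.
  split.
  - intros H x. unfold sr_le. change (fadd f g x = g x). simpl in H. unfold sm_le in H. simpl in H.
    rewrite H. reflexivity.
  - intros H. unfold sm_le. simpl. apply functional_extensionality. intro x. apply H.
Qed.

Lemma FW_le' : forall (f g : X -> K), fle f g <-> sm_le FW f g.
Proof. intros; symmetry; apply FW_le. Qed.

End Fn.

Lemma FW_bcomplete (K : idem_semiring) (HK : b_complete_semiring K) (X : Type) :
  b_complete_semimodule (FW K X).
Proof.
  destruct HK as [HKc [HKl HKr]].
  split; [|split].
  - intros S Hb. apply (bounded_le_ext (sm_le (FW K X)) (@fle K X) _ (@FW_le K X)) in Hb. destruct Hb as [b Hb].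
    assert (Hx : forall x, bounded (sr_le K) (fun c => exists f, S f /\ c = f x)).
    { intros x. exists (b x). intros c [f [Sf ->]]. apply Hb, Sf. }
    exists (fun x => proj1_sig (constructive_indefinite_description _ (HKc _ (Hx x)))).
    apply (is_lub_le_ext (@fle K X) (sm_le (FW K X)) _ _ (@FW_le' K X)). apply (@lub_pw K X). intros x.
    exact (proj2_sig (constructive_indefinite_description _ (HKc _ (Hx x)))).
  - intros Q q f HQ Hq. apply (is_lub_le_ext (@fle K X) (sm_le (FW K X)) _ _ (@FW_le' K X)). apply (@lub_pw K X). intros x.
    eapply (is_lub_ext _ _ _ _); [| exact (HKr Q q (f x) HQ Hq)].
    intros c. split.
    + intros [k [Qk ->]]. exists (fsmul k f). split; [exists k; auto | reflexivity].
    + intros [g [[k [Qk ->]] ->]]. exists k. auto.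
  - intros k S s Hb Hs.
    apply (is_lub_le_ext (sm_le (FW K X)) (@fle K X) _ _ (@FW_le K X)) in Hs.
    apply (is_lub_le_ext (@fle K X) (sm_le (FW K X)) _ _ (@FW_le' K X)). apply (@lub_pw K X). intros x.
    pose proof (@pw_lub K X _ _ Hs x) as Hsx.
    assert (Hbx : bounded (sr_le K) (fun c => exists f, S f /\ c = f x)).
    { exists (s x). apply Hsx. }
    eapply (is_lub_ext _ _ _ _); [| exact (HKl _ _ k Hbx Hsx)].
    intros c. split.
    + intros [d [[f [Sf ->]] ->]]. exists (fsmul k f). split; [exists f; auto | reflexivity].
    + intros [g [[f [Sf ->]] ->]]. exists (f x). split; [exists f; auto | reflexivity].
Qed.

Theorem proposition7p21 (K : idem_semiring) (HK : b_complete_semiring K)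
  (X : Type) (HX : inhabited X) (V : (X -> K) -> Prop)
  (HV : functional_semimodule V) (HVb : b_complete_functional_semimodule V) :
  functional_b_semimodule V <->
  (forall (W : idem_semimodule K), b_complete_semimodule W ->
     forall A : (X -> K) -> W, integral_operator V A -> b_linear V A).
Proof.
  split.
  - intros [Hadd [Hsm Hlub]] W [HWc [HWq HWk]] A [k Hk].
    split; [|split].
    + intros f g h Vf Vg [Vh [Hub Hl]].
      assert (E : h = fadd f g).
      { apply fle_antisym.
        - apply Hl. { apply Hadd; auto. } intros u [-> | ->] x; [apply srle_addl | apply srle_addr].
        - intros x. apply srle_add_least; [apply (Hub f) | apply (Hub g)]; unfold pair_set; auto. }
      subst h.
      destruct (Hk _ Vh) as [_ Hh]. destruct (Hk _ Vf) as [_ Hf]. destruct (Hk _ Vg) as [_ Hg].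
      apply (lub_unique _ _ _ _ (@smle_antisym K W) Hh). split.
      * intros w [x ->]. unfold fadd. rewrite sm_smulDl.
        apply smle_add_least.
        -- eapply smle_trans; [apply Hf; exists x; reflexivity | apply smle_addl].
        -- eapply smle_trans; [apply Hg; exists x; reflexivity | apply smle_addr].
      * intros b Hb. apply smle_add_least.
        -- apply Hf. intros w [x ->]. eapply smle_trans; [| apply Hb; exists x; reflexivity].
           apply smle_smul_mono. apply srle_addl.
        -- apply Hg. intros w [x ->]. eapply smle_trans; [| apply Hb; exists x; reflexivity].
           apply smle_smul_mono. apply srle_addr.
    + intros c f Vf.
      destruct (Hk _ (Hsm c f Vf)) as [_ Hc]. destruct (Hk _ Vf) as [Bf Hf].
      apply (lub_unique _ _ _ _ (@smle_antisym K W) Hc).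
      eapply (is_lub_ext _ _ _ _); [| exact (HWk c _ _ Bf Hf)].
      intros w. split.
      * intros [u [[x ->] ->]]. exists x. unfold fsmul. rewrite sm_smulA. reflexivity.
      * intros [x ->]. exists (sm_smul W (f x) (k x)). split; [exists x; reflexivity|].
        unfold fsmul. rewrite sm_smulA. reflexivity.
    + intros S s HS Hb Hs.
      pose proof (Hlub S s HS Hb Hs) as Hps.
      destruct (Hk _ (proj1 Hs)) as [_ Hls].
      split.
      * intros w [f [Sf ->]]. destruct (Hk f (HS f Sf)) as [_ Hlf].
        apply (proj2 Hlf). intros w [x ->].
        apply (@smle_trans K W _ (sm_smul W (s x) (k x)) _); [| apply (proj1 Hls); exists x; reflexivity].
        apply smle_smul_mono. apply (proj1 Hps f Sf x).
      * intros b Hbb. apply Hls. intros w [x ->].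
        pose proof (@pw_lub K X _ _ Hps x) as Hsx.
        assert (Hbx : bounded (sr_le K) (fun c => exists f, S f /\ c = f x)).
        { exists (s x). apply Hsx. }
        apply (HWq _ _ (k x) Hbx Hsx). intros w [c [[f [Sf ->]] ->]].
        destruct (Hk f (HS f Sf)) as [_ Hlf].
        eapply smle_trans; [apply Hlf; exists x; reflexivity|].
        apply Hbb. exists f. split; [exact Sf | reflexivity].
  - intros H.
    set (A := fun f : X -> K => (f : FW K X)).
    assert (HI : integral_operator V A).
    { exists (fun x => (fun y => if excluded_middle_informative (x = y) then sr_one K else sr_zero K) : FW K X).
      intros f Vf.
      assert (Hub : ub (sm_le (FW K X))
        (fun w => exists x, w = sm_smul (FW K X) (f x)
           (fun y => if excluded_middle_informative (x = y) then sr_one K else sr_zero K)) (A f)).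
      { intros w [x ->]. apply FW_le. intros y. simpl. unfold fsmul.
        destruct (excluded_middle_informative (x = y)) as [->|n].
        - rewrite sr_mul1r. apply srle_refl.
        - rewrite sr_mul0r. apply srle_0. }
      split; [exists (A f); exact Hub|]. split; [exact Hub|].
      intros b Hb. apply FW_le. intros y.
      pose proof (proj1 (@FW_le K X _ _) (Hb _ (ex_intro _ y eq_refl)) y) as Hy.
      simpl in Hy. unfold fsmul in Hy.
      destruct (excluded_middle_informative (y = y)) as [_|n]; [|congruence].
      rewrite sr_mul1r in Hy. exact Hy. }
    destruct (H _ (@FW_bcomplete K HK X) A HI) as [L1 [L2 L3]].
    split; [|split].
    + intros f g Vf Vg. destruct HV as [_ [_ [Hex _]]].
      destruct (Hex f g Vf Vg) as [h Hh].
      pose proof (L1 f g h Vf Vg Hh) as E. unfold A in E. simpl in E.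
      rewrite <- E. exact (proj1 Hh).
    + exact (proj1 HV).
    + intros S s HS Hb Hs. pose proof (L3 S s HS Hb Hs) as L.
      apply (is_lub_le_ext (sm_le (FW K X)) (@fle K X) _ _ (@FW_le K X)) in L.
      eapply (is_lub_ext _ _ _ _); [| exact L].
      intros f. unfold img, A. split.
      * intros [g [Sg ->]]. exact Sg.
      * intros Sf. exists f. auto.
Qed.
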